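(* Let $V$ be a finite nonempty set and $f:\{0,1\}^V\to\{0,1\}^V$. Then $f$ is positive-circular if and only if $f$ is a 2-critical and-net.
   Context: For nonempty $I\subseteq V$ and $z\in\{0,1\}^{V\setminus I}$, the subnetwork of $f$ induced by $z$ is $h:\{0,1\}^I\to\{0,1\}^I$ with $h(x|_I)=f(x)|_I$ for all $x$ whose restriction to $V\setminus I$ is $z$; a strict subnetwork is one different from $f$. $f$ is 2-critical if it has at least two fixed points and every strict subnetwork has at most one fixed point. For $x^{j\alpha}$ the point equal to $x$ except its $j$-component is $\alpha$, the global interaction graph $G(f)$ is the signed digraph on $V$ with a positive (resp. negative) arc from $j$ to $i$ iff $f_i(x^{j1})-f_i(x^{j0})=1$ (resp. $=-1$) for at least one $x$. $f$ is an and-net if $G(f)$ has at most one arc from $j$ to $i$ for all $i,j$ and for every $i$ and $x$: $f_i(x)=1$ iff $G(f)$ has no positive arc $j\to i$ with $x_j=0$ and no negative arc $j\to i$ with $x_j=1$. A cycle is a subgraph with at most one arc between any ordered pair whose underlying unsigned digraph is a directed cycle; positive if it has an even number of negative arcs. $f$ is positive-circular if $G(f)$ itself is a positive cycle through all vertices of $V$. *)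

(* Defs.v *)
From mathcomp Require Import all_boot.
Set Implicit Arguments. Unset Strict Implicit. Unset Printing Implicit Defensive.

Section BN.
Variable T : finType.
Notation conf := {ffun T -> bool}.
Implicit Types (f : conf -> conf) (x z : conf) (I : {set T}).

Definition setc x (j : T) (a : bool) : conf := [ffun k => if k == j then a else x k].

Definition pos_arc f (j i : T) : bool :=
  [exists x : conf, f (setc x j true) i && ~~ f (setc x j false) i].
Definition neg_arc f (j i : T) : bool :=
  [exists x : conf, ~~ f (setc x j true) i && f (setc x j false) i].
Definition arc f (j i : T) : bool := pos_arc f j i || neg_arc f j i.

Definition fixpoints f : {set conf} := [set x : conf | f x == x].

(* Fixed points of the subnetwork h : {0,1}^I -> {0,1}^I induced by
   z|_{V \ I}: they are in bijection with the configurations x such that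
   x|_{V\I} = z|_{V\I} and f(x)|_I = x|_I. *)
Definition sub_fixpoints f I z : {set conf} :=
  [set x : conf | [forall j in ~: I, x j == z j] && [forall i in I, f x i == x i]].

(* strict subnetworks are exactly those with I a nonempty proper subset of V *)
Definition two_critical f : Prop :=
  2 <= #|fixpoints f| /\
  forall I z, I != set0 -> I \proper [set: T] -> #|sub_fixpoints f I z| <= 1.

Definition and_net f : Prop :=
  (forall j i, ~~ (pos_arc f j i && neg_arc f j i)) /\
  (forall i x, f x i =
     [forall j, ~~ (pos_arc f j i && ~~ x j) && ~~ (neg_arc f j i && x j)]).

Definition positive_circular f : Prop :=
  (forall j i, ~~ (pos_arc f j i && neg_arc f j i)) /\
  (exists s : T -> T, [/\ injective s, (forall j k, fconnect s j k)
                         & forall j i, arc f j i = (i == s j)]) /\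
  ~~ odd #|[set p : T * T | neg_arc f p.1 p.2]|.

End BN.

(* Main.v *)
Require Import Defs.
From mathcomp Require Import all_boot.
Import Defs.
Set Implicit Arguments. Unset Strict Implicit. Unset Printing Implicit Defensive.

Section S.
Variable T : finType.
Notation conf := {ffun T -> bool}.
Implicit Types (f : conf -> conf) (x y z : conf).

Lemma setcE x j a k : setc x j a k = if k == j then a else x k.
Proof. by rewrite /setc ffunE. Qed.

Lemma setc_id x j : setc x j (x j) = x.
Proof. by apply/ffunP=> k; rewrite setcE; case: eqP => // ->. Qed.

Lemma noarc f k i : ~~ arc f k i -> forall z b c, f (setc z k b) i = f (setc z k c) i.
Proof.
rewrite /arc /pos_arc /neg_arc negb_or !negb_exists => /andP[/forallP H1 /forallP H2] z.
have E : f (setc z k true) i = f (setc z k false) i.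
  by move: (H1 z) (H2 z); case: (f (setc z k true) i); case: (f (setc z k false) i).
by case; case.
Qed.

Lemma dep_one f i j0 : (forall j, j != j0 -> ~~ arc f j i) ->
  forall x y, x j0 = y j0 -> f x i = f y i.
Proof.
move=> Hna.
suff H : forall n x y, #|[set k | x k != y k]| <= n -> x j0 = y j0 -> f x i = f y i.
  by move=> x y; apply: (H _ x y (leqnn _)).
have E0 : forall x y, [set k | x k != y k] = set0 -> x = y.
  move=> x y H; apply/ffunP=> k; apply/eqP; apply: contraT => Hk.
  have : k \in [set k | x k != y k] by rewrite inE.
  by rewrite H inE.
elim=> [|n IH] x y.
  by rewrite leqn0 cards_eq0 => /eqP H _; rewrite (E0 _ _ H).
case: (set_0Vmem [set k | x k != y k]) => [H|[k Hk]] Hn Hj.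
  by rewrite (E0 _ _ H).
have Hkj : k != j0 by move: Hk; rewrite inE; apply: contraNneq => ->; rewrite Hj.
rewrite -(setc_id x k) (noarc (Hna _ Hkj) x (x k) (y k)).
apply: IH; last by rewrite setcE eq_sym (negbTE Hkj).
have -> : [set k0 | setc x k (y k) k0 != y k0] = [set k | x k != y k] :\ k.
  apply/setP=> l; rewrite !inE setcE; case: (l =P k) => [->|_]; by rewrite ?eqxx.
by rewrite (cardsD1 k) Hk /= in Hn.
Qed.


Lemma negcard f (g : T -> T) : (forall j i, neg_arc f j i -> j = g i) ->
  #|[set p : T * T | neg_arc f p.1 p.2]| = \sum_i neg_arc f (g i) i.
Proof.
move=> Hg.
have -> : [set p : T * T | neg_arc f p.1 p.2] =
          [set (g i, i) | i in [set i | neg_arc f (g i) i]].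
  apply/setP=> [[j i]]; rewrite inE /=; apply/idP/imsetP => [H|[k]].
    by exists i; rewrite ?inE -?(Hg _ _ H).
  by rewrite inE => H [-> ->].
rewrite card_imset; last by move=> a b [].
rewrite -sum1_card big_mkcond /=; apply: eq_bigr => i _; rewrite inE.
by case: (neg_arc f (g i) i).
Qed.

Lemma orbit_sum (s : T -> T) r (G : T -> nat) : (forall k, fconnect s r k) ->
  \sum_(u < order s r) G (iter u s r) = \sum_k G k.
Proof.
move=> Hc.
have Hp : perm_eq (orbit s r) (enum T).
  apply: uniq_perm; [exact: orbit_uniq | exact: enum_uniq |].
  by move=> k; rewrite -fconnect_orbit Hc mem_enum.
have -> : \sum_k G k = \sum_(k <- enum T) G k by rewrite big_enum.
rewrite -(perm_big _ Hp) (big_nth r) size_traject big_mkord.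
by apply: eq_bigr => u _; rewrite nth_traject.
Qed.

Section Fwd.
Variables (f : conf -> conf) (s : T -> T).
Hypothesis Hnb : forall j i, ~~ (pos_arc f j i && neg_arc f j i).
Hypothesis Hinj : injective s.
Hypothesis Hconn : forall j k, fconnect s j k.
Hypothesis Harc : forall j i, arc f j i = (i == s j).

Let pr := finv s.

Lemma fwd_noarc j i : j != pr i -> ~~ arc f j i.
Proof.
rewrite Harc; apply: contra => /eqP ->; by rewrite /pr finv_f.
Qed.

Lemma fwd_arc i : arc f (pr i) i.
Proof. by rewrite Harc /pr f_finv. Qed.

Lemma fwd_dep i x y : x (pr i) = y (pr i) -> f x i = f y i.
Proof. by apply: dep_one => j; apply: fwd_noarc. Qed.

Lemma fwd_form x i : f x i = x (pr i) (+) neg_arc f (pr i) i.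
Proof.
have := fwd_arc i; have := Hnb (pr i) i.
rewrite /arc; case Hp: (pos_arc f (pr i) i); case Hn: (neg_arc f (pr i) i) => //= _ _.
- move: Hp; rewrite /pos_arc => /existsP[x0 /andP[H1 H2]].
  rewrite (@fwd_dep i x (setc x0 (pr i) (x (pr i)))); last by rewrite setcE eqxx.
  by case: (x (pr i)) => //=; apply/negbTE.
- move: Hn; rewrite /neg_arc => /existsP[x0 /andP[H1 H2]].
  rewrite (@fwd_dep i x (setc x0 (pr i) (x (pr i)))); last by rewrite setcE eqxx.
  by case: (x (pr i)) => //=; apply/negbTE.
Qed.

Lemma fwd_andnet : and_net f.
Proof.
split => // i x.
have Hother : forall j, j != pr i -> ~~ (pos_arc f j i && ~~ x j) && ~~ (neg_arc f j i && x j).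
  move=> j /fwd_noarc; rewrite /arc negb_or => /andP[/negbTE -> /negbTE ->] //.
transitivity (~~ (pos_arc f (pr i) i && ~~ x (pr i)) && ~~ (neg_arc f (pr i) i && x (pr i))).
  rewrite fwd_form; have := fwd_arc i; have := Hnb (pr i) i; rewrite /arc.
  by case: (pos_arc f (pr i) i); case: (neg_arc f (pr i) i); case: (x (pr i)).
apply/idP/forallP => [H j | H]; last exact: H (pr i).
by case: (j =P pr i) => [->//|/eqP Hj]; apply: Hother.
Qed.

Lemma fwd_crit I z : I != [set: T] -> #|sub_fixpoints f I z| <= 1.
Proof.
move=> HI; apply/card_le1_eqP => x y.
rewrite !inE => /andP[/forall_inP Hx1 /forall_inP Hx2] /andP[/forall_inP Hy1 /forall_inP Hy2].
case: (pickP (fun k => k \notin I)) => [k Hk|H]; last first.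
  by case/negP: HI; apply/eqP/setP=> k; rewrite inE; apply/negbFE: (H k).
have Hit : forall t, x (iter t s k) = y (iter t s k).
  elim=> [|t IH] /=.
    by rewrite (eqP (Hx1 k _)) ?(eqP (Hy1 k _)) // inE.
  case HI': (s (iter t s k) \in I).
    rewrite -(eqP (Hx2 _ HI')) -(eqP (Hy2 _ HI')); apply: fwd_dep.
    by rewrite /pr finv_f.
  by rewrite (eqP (Hx1 _ _)) ?(eqP (Hy1 _ _)) // inE HI'.
apply/ffunP=> i; by rewrite -(iter_findex (Hconn k i)).
Qed.

Hypothesis Hpar : ~~ odd #|[set p : T * T | neg_arc f p.1 p.2]|.

Lemma fwd_negpr j i : neg_arc f j i -> j = pr i.
Proof.
move=> Hn; apply/eqP; apply: contraT => /fwd_noarc; by rewrite /arc Hn orbT.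
Qed.

Lemma fwd_fix (r : T) : exists p : conf, forall i, f p i = p i.
Proof.
pose nu i := neg_arc f (pr i) i.
exists [ffun k => odd (\sum_(u < findex s r k) nu (iter u.+1 s r))] => i.
rewrite fwd_form !ffunE.
have Hi : i = s (pr i) by rewrite /pr f_finv.
have Hj := iter_findex (Hconn r (pr i)).
have Hlt := findex_max (Hconn r (pr i)).
move: Hj Hlt; set t := findex s r (pr i) => Hj Hlt.
have Hit : iter t.+1 s r = i by rewrite /= Hj -Hi.
case: (ltngtP t.+1 (order s r)) => [Hlt'|Hgt|Heq].
  by rewrite -Hit findex_iter // big_ord_recr /= oddD oddb.
- by move: Hgt; rewrite ltnNge Hlt.
- have Hr : i = r by rewrite -Hit Heq iter_order.
  have -> : findex s r i = 0 by rewrite Hr -{2}[r]/(iter 0 s r) findex_iter ?order_gt0.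
  rewrite big_ord0 /=.
  have -> : neg_arc f (pr i) i = nu (iter t.+1 s r) by rewrite Hit.
  rewrite -[nu (iter t.+1 s r)]oddb -oddD.
  have -> : \sum_(u < t) nu (iter u.+1 s r) + nu (iter t.+1 s r) =
           \sum_(u < t.+1) nu (iter u.+1 s r) by rewrite big_ord_recr.
  rewrite Heq (orbit_sum (fun k => nu (s k)) (Hconn r)).
  rewrite -(reindex_inj Hinj (P := xpredT) (F := fun k => nat_of_bool (nu k))) /nu.
  rewrite -(negcard fwd_negpr); exact/negbTE.
Qed.

End Fwd.
Definition tm f j i (b : bool) := ~~ (pos_arc f j i && ~~ b) && ~~ (neg_arc f j i && b).

Section Bwd.
Variable f : conf -> conf.
Hypothesis Hnb : forall j i, ~~ (pos_arc f j i && neg_arc f j i).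
Hypothesis Hform : forall i x, f x i =
     [forall j, ~~ (pos_arc f j i && ~~ x j) && ~~ (neg_arc f j i && x j)].
Hypothesis Hcrit : forall I z, I != set0 -> I \proper [set: T] -> #|sub_fixpoints f I z| <= 1.

Lemma formE i x : f x i = [forall j, tm f j i (x j)].
Proof. by rewrite Hform. Qed.

Lemma tm_noarc j i b : ~~ arc f j i -> tm f j i b.
Proof. by rewrite /arc /tm negb_or => /andP[/negbTE -> /negbTE ->]. Qed.

Lemma Plem p : f p = p -> forall x, [set i | x i != p i] != set0 ->
  [set i | x i != p i] != [set: T] -> exists i, (x i != p i) && (f x i != x i).
Proof.
move=> Hp x H0 HT.
case: (pickP (fun i => (x i != p i) && (f x i != x i))) => [i Hi|Hnone]; first by exists i.
exfalso.
have Hpr : [set i | x i != p i] \proper [set: T] by rewrite properT.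
have /card_le1_eqP Hall := Hcrit p H0 Hpr.
have Hx : x \in sub_fixpoints f [set i | x i != p i] p.
  rewrite inE; apply/andP; split; apply/forall_inP => j; rewrite !inE ?negbK // => Hj.
  by move: (Hnone j); rewrite /= Hj /= => /negbFE.
have Hpp : p \in sub_fixpoints f [set i | x i != p i] p.
  by rewrite inE; apply/andP; split; apply/forall_inP => j _; rewrite ?Hp eqxx.
have Exp := Hall _ _ Hx Hpp.
move: H0; rewrite Exp; case/set0Pn => i; by rewrite inE eqxx.
Qed.

Variables p q : conf.
Hypothesis Hp : f p = p.
Hypothesis Hq : f q = q.
Hypothesis Hpq : forall i, q i = ~~ p i.

Lemma inarc v : exists j, arc f j v.
Proof.
case: (pickP (fun j => arc f j v)) => [j Hj|H]; first by exists j.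
have Ht : forall x, f x v = true.
  by move=> x; rewrite formE; apply/forallP => j; apply: tm_noarc; rewrite H.
by move: (Ht p) (Ht q); rewrite Hp Hq Hpq => ->.
Qed.

Lemma mono x x' (y : T) : (forall j, x' j = x j \/ x' j = q j) ->
  f x y = q y -> f x' y = q y.
Proof.
move=> Hx; case Hqy: (q y) => Hfx.
- move: Hfx (Hqy); rewrite -Hq !formE => /forallP H1 /forallP H2.
  apply/forallP => j; case: (Hx j) => ->; [exact: H1 | exact: H2].
- have Hpy : p y by move: (Hpq y); rewrite Hqy; case: (p y).
  move: Hfx (Hpy); rewrite -Hp !formE => /forallPn[j Hj] /forallP H2.
  apply/forallPn; exists j; case: (Hx j) => -> //.
  move: Hj (H2 j); rewrite Hpq; by case: (p j); case: (x j) => //= /negP H /H.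
Qed.

Lemma growth (Hn : 1 < #|T|) v :
  exists l, f [ffun i => if i == l then p i else q i] v = p v.
Proof.
pose xS (S : {set T}) : conf := [ffun i => if i \in S then q i else p i].
pose P (S : {set T}) := [&& v \in S, S != [set: T] &
   [forall y in S, (y != v) ==> (f (xS S) y == q y)]].
have P0 : P [set v].
  rewrite /P inE eqxx /=; apply/andP; split.
    apply/negP => /eqP E; move: Hn; by rewrite -cardsT -E cards1.
  by apply/forall_inP => y; rewrite inE => ->.
case: (arg_maxnP (fun S : {set T} => #|S|) P0) => S /and3P[HvS HST /forall_inP HS] Hmax.
have HpqN : forall i, (p i != q i).
  by move=> i; rewrite Hpq; case: (p i).
have Hc1 : #|~: S| <= 1.
  rewrite leqNgt; apply/negP => Hgt.
  have HD : [set i | xS S i != q i] = ~: S.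
    by apply/setP=> i; rewrite !inE ffunE; case: (i \in S); rewrite ?eqxx // HpqN.
  have [w /andP[Hw1 Hw2]] : exists w, (xS S w != q w) && (f (xS S) w != xS S w).
    apply: (Plem Hq); rewrite HD.
      by rewrite -card_gt0 (ltn_trans _ Hgt).
    apply/negP => /eqP E; move: (in_setT v); by rewrite -E inE HvS.
  have HwS : w \notin S by move: Hw1; rewrite ffunE; case: (w \in S); rewrite ?eqxx.
  have Hfw : f (xS S) w = q w.
    by move: Hw2; rewrite ffunE (negbTE HwS) Hpq; case: (f (xS S) w); case: (p w).
  suff HP : P (w |: S) by move: (Hmax _ HP); rewrite cardsU1 HwS /= ltnn.
  rewrite /P !inE HvS orbT /=; apply/andP; split.
    case/card_gt1P: Hgt => a [b [Ha Hb Hab]].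
    have [c Hc1 Hc2] : exists2 c, c \notin S & c != w.
      case: (a =P w) => [Eaw|/eqP Naw]; last by exists a; rewrite -?in_setC.
      by exists b; rewrite -?in_setC // -Eaw eq_sym.
    apply/eqP => E; move: (in_setT c); rewrite -E !inE; by rewrite (negbTE Hc2) (negbTE Hc1).
  apply/forall_inP => y; rewrite inE => Hy; apply/implyP => Hyv; apply/eqP.
  have Hy' : f (xS S) y = q y.
    case/orP: Hy => [|HyS]; first by rewrite inE => /eqP ->. 
    exact/eqP/(implyP (HS y HyS)).
  apply: (mono _ Hy') => j; rewrite !ffunE !inE.
  case: (j =P w) => [->|_] /=; first by right.
  by left.
have [l Hl] : exists l, ~: S = [set l].
  apply/cards1P; rewrite eqn_leq Hc1 card_gt0; apply: contraNneq HST => E.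
  by apply/eqP/setP=> i; rewrite inE -[i \in S]negbK -in_setC E inE.
have HxS : xS S = [ffun i => if i == l then p i else q i].
  apply/ffunP=> i; rewrite !ffunE -[i \in S]negbK -in_setC Hl inE.
  by case: (i == l).
exists l; rewrite -HxS.
have HD : [set i | xS S i != p i] = S.
  by apply/setP=> i; rewrite !inE ffunE; case: (i \in S); rewrite ?eqxx // eq_sym HpqN.
have [i /andP[Hi1 Hi2]] : exists i, (xS S i != p i) && (f (xS S) i != xS S i).
  apply: (Plem Hp); rewrite HD //; by apply/set0Pn; exists v.
have HiS : i \in S by move: Hi1; rewrite ffunE; case: (i \in S); rewrite ?eqxx.
move: Hi2; rewrite ffunE HiS.
case: (i =P v) => [->|/eqP Hiv].
  by rewrite Hpq; case: (f (xS S) v); case: (p v).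
by rewrite (eqP (implyP (HS i HiS) Hiv)) eqxx.
Qed.

End Bwd.
Lemma oddsum (g : T -> T) (a : T -> bool) : injective g ->
  ~~ odd (\sum_i (a i != a (g i))).
Proof.
move=> Hg.
have E : \sum_i (a i != a (g i)) + (\sum_i (a i && a (g i))).*2 = (\sum_i (a i : nat)).*2.
  rewrite -!addnn {2}(reindex_inj Hg (P := xpredT) (F := fun i => nat_of_bool (a i))).
  rewrite addnA -!big_split /=; apply: eq_bigr => i _.
  by case: (a i); case: (a (g i)).
by move: (congr1 odd E); rewrite oddD !odd_double addbF => ->.
Qed.

Section Bwd2.
Variable f : conf -> conf.
Hypothesis Hnb : forall j i, ~~ (pos_arc f j i && neg_arc f j i).
Hypothesis Hform : forall i x, f x i =
     [forall j, ~~ (pos_arc f j i && ~~ x j) && ~~ (neg_arc f j i && x j)].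
Hypothesis Hcrit : forall I z, I != set0 -> I \proper [set: T] -> #|sub_fixpoints f I z| <= 1.
Variables p q : conf.
Hypothesis Hp : f p = p.
Hypothesis Hq : f q = q.
Hypothesis Hpq : forall i, q i = ~~ p i.

Lemma all_eq1 : #|T| <= 1 -> forall a b : T, a = b.
Proof. by move/card_le1_eqP => H a b; apply: H. Qed.

Lemma onepred v : exists l, forall j, arc f j v -> j = l.
Proof.
case: (ltnP 1 #|T|) => Hn; last by exists v => j _; apply: all_eq1.
have key : forall p' q' : conf, f p' = p' -> f q' = q' -> (forall i, q' i = ~~ p' i) ->
    p' v -> exists l, forall j, arc f j v -> j = l.
  move=> p' q' Hp' Hq' Hpq' Hv.
  have [l Hl] := growth Hform Hcrit Hp' Hq' Hpq' Hn v.
  exists l => j Hj; apply/eqP; apply: contraTT Hj => Hjl.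
  move: Hl; rewrite Hv (formE Hform) => /forallP H1.
  move: Hv; rewrite -Hp' (formE Hform) => /forallP H2.
  move: (H1 j) (H2 j); rewrite ffunE (negbTE Hjl) Hpq' /tm /arc.
  by case: (pos_arc f j v); case: (neg_arc f j v); case: (p' j).
case Hpv: (p v); first exact: (key p q).
apply: (key q p) => // [i|]; first by rewrite Hpq negbK.
by rewrite Hpq Hpv.
Qed.

Definition pr v := odflt v [pick j | arc f j v].

Lemma pr_arc v : arc f (pr v) v.
Proof.
rewrite /pr; case: pickP => [j //|H].
by have [j Hj] := inarc Hform Hp Hq Hpq v; move: (H j); rewrite Hj.
Qed.

Lemma pr_uniq j v : arc f j v -> j = pr v.
Proof.
have [l Hl] := onepred v; move=> Hj.
by rewrite (Hl _ Hj) (Hl _ (pr_arc v)).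
Qed.

Lemma and_dep x y i : x (pr i) = y (pr i) -> f x i = f y i.
Proof.
move=> E; rewrite !(formE Hform); apply: eq_forallb => j.
case: (j =P pr i) => [->|/eqP Hj]; first by rewrite E.
have Hna : ~~ arc f j i by apply: contra Hj => /pr_uniq ->.
by rewrite !(tm_noarc _ Hna).
Qed.

Lemma pr_surj m : exists i, pr i = m.
Proof.
case: (ltnP 1 #|T|) => Hn; last by exists m; apply: all_eq1.
case: (pickP (fun i => pr i == m)) => [i /eqP Hi|Hnone]; first by exists i.
exfalso.
have Hna : forall i, ~~ arc f m i.
  by move=> i; apply/negP => /pr_uniq E; move: (Hnone i); rewrite -E eqxx.
pose x := setc p m (q m).
have Hfx : f x = p.
  apply/ffunP => i; rewrite -[in RHS]Hp !(formE Hform); apply: eq_forallb => j.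
  case: (j =P m) => [->|/eqP Hj]; first by rewrite !(tm_noarc _ (Hna i)).
  by rewrite setcE (negbTE Hj).
have [c Hcm] : exists c, c != m.
  case/card_gt1P: Hn => a [b [_ _ Hab]].
  case: (a =P m) => [Ea|/eqP Na]; last by exists a.
  by exists b; rewrite -Ea eq_sym.
have HpqN : forall i, (p i != q i) by move=> i; rewrite Hpq; case: (p i).
have [i /andP[Hi1 Hi2]] : exists i, (x i != q i) && (f x i != x i).
  apply: (Plem Hcrit Hq).
    by apply/set0Pn; exists c; rewrite inE setcE (negbTE Hcm).
  by apply/negP => /eqP E; move: (in_setT m); rewrite -E inE setcE eqxx eqxx.
move: Hi1 Hi2; rewrite Hfx setcE; case: (i =P m) => [->|_]; by rewrite eqxx.
Qed.

Definition sc j := odflt j [pick i | pr i == j].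

Lemma pr_sc j : pr (sc j) = j.
Proof.
rewrite /sc; case: pickP => [i /eqP //|H].
by have [i Hi] := pr_surj j; move: (H i); rewrite Hi eqxx.
Qed.

Lemma sc_inj : injective sc.
Proof. exact: can_inj pr_sc. Qed.

Lemma sc_pr i : sc (pr i) = i.
Proof. have E : i = sc (finv sc i) by rewrite f_finv //; exact: sc_inj.
by rewrite {1}E pr_sc -E. Qed.

Lemma arc_sc j i : arc f j i = (i == sc j).
Proof.
apply/idP/eqP => [/pr_uniq ->|->]; first by rewrite sc_pr.
by have := pr_arc (sc j); rewrite pr_sc.
Qed.

Lemma conn j k : fconnect sc j k.
Proof.
apply/idPn => Hjk.
pose x : conf := [ffun i => if fconnect sc j i then q i else p i].
have HpqN : forall i, (q i != p i) by move=> i; rewrite Hpq; case: (p i).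
have HD : [set i | x i != p i] = [set i | fconnect sc j i].
  by apply/setP=> i; rewrite !inE ffunE; case: (fconnect sc j i); rewrite ?eqxx ?HpqN.
have [i /andP[Hi1 Hi2]] : exists i, (x i != p i) && (f x i != x i).
  apply: (Plem Hcrit Hp); rewrite HD.
    by apply/set0Pn; exists j; rewrite inE connect0.
  by apply/negP => /eqP E; move: (in_setT k); rewrite -E inE (negbTE Hjk).
have Hji : fconnect sc j i.
  by move: Hi1; rewrite ffunE; case: (fconnect sc j i); rewrite ?eqxx.
have Hjpi : fconnect sc j (pr i).
  apply: connect_trans Hji _; rewrite fconnect_sym; last exact: sc_inj.
  by rewrite -{2}(sc_pr i); apply: fconnect1.
move: Hi2; rewrite ffunE Hji (@and_dep x q i) ?Hq ?eqxx //.
by rewrite ffunE Hjpi.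
Qed.

Lemma fp_tm i : f p i = tm f (pr i) i (p (pr i)).
Proof.
rewrite (formE Hform); apply/forallP/idP => [H|H j]; first exact: H.
case: (j =P pr i) => [->//|/eqP Hj].
by apply: tm_noarc; apply: contra Hj => /pr_uniq ->.
Qed.

Lemma parity : ~~ odd #|[set pp : T * T | neg_arc f pp.1 pp.2]|.
Proof.
rewrite (@negcard f pr); last by move=> j i Hn; apply: pr_uniq; rewrite /arc Hn orbT.
have -> : \sum_i neg_arc f (pr i) i = \sum_i (p i != p (pr i)).
  apply: eq_bigr => i _.
  have := fp_tm i; rewrite Hp; have := pr_arc i; have := Hnb (pr i) i.
  rewrite /tm /arc.
  by case: (pos_arc f (pr i) i); case: (neg_arc f (pr i) i); case: (p i); case: (p (pr i)).
apply: oddsum; exact: can_inj sc_pr.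
Qed.

End Bwd2.
End S.

Theorem theorem11 (T : finType) (HV : 0 < #|T|)
    (f : {ffun T -> bool} -> {ffun T -> bool}) :
  positive_circular f <-> (two_critical f /\ and_net f).
Proof.
split.
- case=> Hnb [[s [Hinj Hconn Harc]] Hpar].
  split; last exact: fwd_andnet Hnb Hinj Harc.
  split.
  + have [r _] : exists r : T, true.
      case: (pickP (@predT T)) => [r _|H]; first by exists r.
      by move: HV; rewrite (eq_card0 H).
    have [p Hp] := fwd_fix Hnb Hinj Hconn Harc Hpar r.
    pose q : {ffun T -> bool} := [ffun i => ~~ p i].
    have Hq : forall i, f q i = q i.
      move=> i; rewrite (fwd_form Hnb Hinj Harc) !ffunE -[p i in RHS]Hp (fwd_form Hnb Hinj Harc).
      by case: (p _); case: (neg_arc _ _ _).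
    apply/card_gt1P; exists p, q; split; rewrite ?inE.
    * by apply/eqP/ffunP.
    * by apply/eqP/ffunP.
    * apply/eqP => /ffunP /(_ r); rewrite ffunE; by case: (p r).
  + by move=> I z _ HI; apply: (fwd_crit Hinj Hconn Harc); rewrite -properT.
- case=> [[H2 Hcrit] [Hnb Hform]].
  case/card_gt1P: H2 => p [p1 [Hp Hp1 Hne]].
  move: Hp Hp1; rewrite !inE => /eqP Hp /eqP Hp1.
  have Hpq : forall i, p1 i = ~~ p i.
    have HD : [set i | p1 i != p i] = [set: T].
      apply/eqP; apply/negP => HT.
      have H0 : [set i | p1 i != p i] != set0.
        apply/set0Pn; apply/existsP; apply: contraNT Hne => /existsPn H.
        apply/eqP/ffunP => i; move: (H i); rewrite inE negbK => /eqP.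
        by move=> ->.
      have [i /andP[Hi1 Hi2]] := Plem Hcrit Hp H0 (introT negP HT).
      by move: Hi2; rewrite Hp1 eqxx.
    move=> i; move: (in_setT i); rewrite -HD inE.
    by case: (p1 i); case: (p i).
  split => //; split.
    exists (sc f); split.
    * exact: (sc_inj Hform Hcrit Hp Hp1 Hpq).
    * exact: (conn Hform Hcrit Hp Hp1 Hpq).
    * exact: (arc_sc Hform Hcrit Hp Hp1 Hpq).
  exact: (parity Hnb Hform Hcrit Hp Hp1 Hpq).
Qed.
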